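(* Let $\alpha\in\mathbb{F}_q^*$ and let $\mathscr{C}\subseteq\mathbb{F}_q^n$ be a skew $\alpha$-cyclic code whose generator polynomial has positive degree. If $\mathscr{C}=\mathscr{C}^\perp$, then $n$ is even and $\alpha=\pm1$.
   Context: Let $\mathbb{F}_q$ be a finite field and $\theta$ a field automorphism of $\mathbb{F}_q$. For $\alpha\in\mathbb{F}_q^*$, a linear code $\mathscr{C}\subseteq\mathbb{F}_q^n$ is skew $\alpha$-cyclic if it is invariant under $\phi_{\alpha,\theta}(c_0,\dots,c_{n-1})=(\alpha\theta(c_{n-1}),\theta(c_0),\dots,\theta(c_{n-2}))$. Let $R=\mathbb{F}_q[x;\theta]$ be the skew polynomial ring with multiplication rule $xa=\theta(a)x$ for $a\in\mathbb{F}_q$. Identify $(a_0,\dots,a_{n-1})\in\mathbb{F}_q^n$ with the class of $\sum_i a_ix^i$ in the left $R$-module $R/R(x^n-\alpha)$. Under this identification a skew $\alpha$-cyclic code is a left $R$-submodule of the form $Rg/R(x^n-\alpha)$ for a unique monic $g\in R$ of minimal degree, which is a right divisor of $x^n-\alpha$ (the generator polynomial); the code has dimension $n-\deg g$. $\mathscr{C}^\perp$ denotes the dual code with respect to the standard bilinear form. *)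

(* Defs.v *)
From HB Require Import structures.
From mathcomp Require Import all_boot all_order all_algebra all_field.
Set Implicit Arguments. Unset Strict Implicit. Unset Printing Implicit Defensive.
Import GRing.Theory.
Local Open Scope ring_scope.

(* Skew polynomial ring F[x; theta]: the underlying additive group is {poly F}
   (coefficient sequences), with multiplication determined by x a = theta(a) x:
   (sum a_i x^i)(sum b_j x^j) = sum a_i theta^i(b_j) x^(i+j). *)
Definition skew_mul (F : fieldType) (theta : {rmorphism F -> F}) (p q : {poly F})
  : {poly F} :=
  \sum_(i < size p) \sum_(j < size q)
     (p`_i * iter i theta q`_j) *: 'X^(i + j).

Definition skew_shift (F : fieldType) (theta : {rmorphism F -> F}) (alpha : F)
  (n : nat) (c : 'rV[F]_n) : 'rV[F]_n :=
  \row_(i < n) ((if val i == 0%N then alpha else 1) * theta (c 0 (ord_pred i))).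

Definition linear_code (F : finFieldType) (n : nat) (C : {set 'rV[F]_n}) : Prop :=
  0 \in C /\ (forall a u v, u \in C -> v \in C -> a *: u + v \in C).

Definition skew_cyclic_code (F : finFieldType) (theta : {rmorphism F -> F})
  (alpha : F) (n : nat) (C : {set 'rV[F]_n}) : Prop :=
  linear_code C /\ (forall c, c \in C -> skew_shift theta alpha c \in C).

Definition dual_code (F : finFieldType) (n : nat) (C : {set 'rV[F]_n})
  : {set 'rV[F]_n} :=
  [set v | [forall c in C, (v *m c^T) 0 0 == 0]].

(* g is the generator polynomial of C: g is monic, right-divides x^n - alpha in
   F[x;theta], and C = R g / R(x^n - alpha), i.e. the codewords are exactly the
   coefficient vectors c (identified with sum_i c_i x^i, of degree < n) of the
   left multiples f g of g. *)
Definition skew_generator_poly (F : finFieldType) (theta : {rmorphism F -> F})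
  (alpha : F) (n : nat) (C : {set 'rV[F]_n}) (g : {poly F}) : Prop :=
  [/\ g \is monic,
      exists h : {poly F}, skew_mul theta h g = 'X^n - alpha%:P
    & forall c : 'rV[F]_n, c \in C <-> exists f : {poly F}, rVpoly c = skew_mul theta f g].

(* Main.v *)
Require Import Defs.
From HB Require Import structures.
From mathcomp Require Import all_boot all_order all_algebra all_field.
From mathcomp Require Import zify.
Import GRing.Theory.
Local Open Scope ring_scope.

From mathcomp Require Import ring.
Lemma skew_coef (F : fieldType) (theta : {rmorphism F -> F}) (p q : {poly F}) m :
  (skew_mul theta p q)`_m = \sum_(i < size p) \sum_(j < size q)
     (p`_i * iter i theta q`_j) * ((m == i + j)%N%:R).
Proof.
rewrite /skew_mul coef_sum; apply: eq_bigr => i _; rewrite coef_sum.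
by apply: eq_bigr => j _; rewrite coefZ coefXn.
Qed.

Lemma iter_rm1 (F : fieldType) (theta : {rmorphism F -> F}) i : iter i theta 1 = 1.
Proof. by elim: i => //= i ->; rewrite rmorph1. Qed.

Lemma skew_top (F : fieldType) (theta : {rmorphism F -> F}) (h g : {poly F}) :
  g \is monic -> forall m, ((size h).-1 + (size g).-1 <= m)%N ->
  (skew_mul theta h g)`_m = (m == (size h).-1 + (size g).-1)%N%:R * lead_coef h.
Proof.
move=> mg m; rewrite skew_coef.
move/monicP: (mg); rewrite /lead_coef => g1.
have := monic_neq0 mg; rewrite -size_poly_eq0.
case sg: (size g) g1 => [|t] // g1 _.
case sh: (size h) => [|s] le.
  by rewrite big_ord0 nth_default ?mulr0 // sh.
rewrite big_ord_recr /= big1 ?add0r; last first.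
  move=> i _; rewrite big1 // => j _.
  rewrite (_ : (m == _) = false) ?mulr0 //; apply/negbTE; apply/eqP => E.
  have := ltn_ord i; have := ltn_ord j; rewrite /= in le; lia.
rewrite big_ord_recr /= big1 ?add0r; last first.
  move=> j _.
  rewrite (_ : (m == _) = false) ?mulr0 //; apply/negbTE; apply/eqP => E.
  have := ltn_ord j; rewrite /= in le; lia.
by rewrite g1 iter_rm1 mulr1 mulrC.
Qed.
Lemma dotE (F : fieldType) n (u v : 'rV[F]_n) :
  (u *m v^T) 0 0 = \sum_j u 0 j * v 0 j.
Proof. by rewrite !mxE; apply: eq_bigr => j _; rewrite mxE. Qed.

Lemma selfdual_even (F : finFieldType) n (C : {set 'rV[F]_n}) :
  linear_code C -> C = dual_code C -> ~~ odd n.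
Proof.
move=> [C0 Clin] Cd.
pose G : 'M[F]_(#|C|, n) := \matrix_(i < #|C|) (@enum_val _ (mem C) i).
have inG c : c \in C -> (c <= G)%MS.
  move=> cC; rewrite -(enum_rankK_in cC cC) -[X in (X <= _)%MS]rowK.
  exact: row_sub.
have Gin v : (v <= G)%MS -> v \in C.
  case/submxP => w ->; rewrite mulmx_sum_row.
  apply: (big_ind (fun x => x \in C)) => //.
    by move=> x y xC yC; rewrite -[x]scale1r Clin.
  by move=> i _; rewrite -[_ *: _]addr0 Clin // rowK enum_valP.
have dualE v : (v \in C) = (v *m G^T == 0).
  rewrite {1}Cd inE; apply/forall_inP/eqP => [H|H c cC].
    apply/rowP => i; rewrite [RHS]mxE.
    have /eqP := H _ (enum_valP i); rewrite dotE => E; rewrite -[RHS]E mxE.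
    by apply: eq_bigr => j _; rewrite !mxE.
  have := congr1 (fun M : 'M_(1, #|C|) => M 0 (enum_rank_in cC c)) H.
  rewrite [RHS]mxE mxE => E; apply/eqP; rewrite dotE -[RHS]E.
  by apply: eq_bigr => j _; rewrite !mxE (enum_rankK_in cC cC).
have s1 : (G <= kermx G^T)%MS.
  apply/row_subP => i; rewrite sub_kermx -dualE rowK; exact: enum_valP.
have s2 : (kermx G^T <= G)%MS.
  apply/row_subP => i; apply: inG; rewrite dualE -sub_kermx.
  exact: row_sub.
have r1 := mxrankS s1; have r2 := mxrankS s2.
rewrite mxrank_ker mxrank_tr in r1 r2.
have := rank_leq_col G => r3.
have E : n = (\rank G + \rank G)%N by lia.
by rewrite E addnn odd_double.
Qed.

Theorem mainTheorem3 (F : finFieldType) (theta : {rmorphism F -> F})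
  (alpha : F) (n : nat) (C : {set 'rV[F]_n}) (g : {poly F}) :
  alpha != 0 ->
  skew_cyclic_code theta alpha C ->
  skew_generator_poly theta alpha C g ->
  (0 < (size g).-1)%N ->
  C = dual_code C ->
  ~~ odd n /\ (alpha = 1 \/ alpha = -1).
Proof.
move=> a0 [Clin Csh] [mg [h hg] Cdef] kpos Cd.
have ev := @selfdual_even F n C Clin Cd; split => //.
have [h0 | h0] := eqVneq h 0.
  rewrite h0 /skew_mul size_poly0 big_ord0 in hg.
  have := congr1 (fun p : {poly F} => p`_n) hg; rewrite coef0 coefB coefXn coefC eqxx.
  have [n0|npos] := posnP n.
    by move/eqP; rewrite eq_sym subr_eq0 => /eqP <-; left.
  by rewrite subr0 => /eqP; rewrite eq_sym oner_eq0.
have top := @skew_top F theta h g mg.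
have dn : ((size h).-1 + (size g).-1)%N = n.
  have := top _ (leqnn _); rewrite eqxx mul1r hg coefB coefXn coefC.
  have : ((size h).-1 + (size g).-1 != 0)%N by lia.
  move/negbTE => ->; rewrite subr0.
  case: eqP => [e _|_ E]; first exact e.
  by move: h0; rewrite -lead_coef_eq0 -E eqxx.
have npos : (0 < n)%N by lia.
pose i0 : 'I_n := Ordinal npos.
have ni : (n.-1 < n)%N by lia.
pose il : 'I_n := Ordinal ni.
have [c cC c1] : exists2 c, c \in C & c 0 il = 1.
  have hpos : (0 < size h)%N by rewrite size_poly_gt0.
  have [sh1|sh2] : (size h = 1)%N \/ (1 < size h)%N by lia.
  - exfalso.
    have Cz : forall c, c \in C -> c = 0.
      move=> c /Cdef [f Ef]; have [f0|fn0] := eqVneq f 0.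
        rewrite f0 /skew_mul size_poly0 big_ord0 in Ef.
        by rewrite -[c]rVpolyK Ef; apply/rowP => j; rewrite !mxE coef0.
      have := @skew_top F theta f g mg _ (leqnn _); rewrite eqxx mul1r -Ef.
      rewrite nth_default; last first.
        apply: leq_trans (size_poly _ _) _.
        by rewrite -dn sh1 /= leq_addl.
      by move/esym/eqP; rewrite lead_coef_eq0 (negbTE fn0).
    have vC : const_mx 1 \in C.
      by rewrite Cd inE; apply/forall_inP => c /Cz ->; rewrite trmx0 mulmx0 mxE.
    have := congr1 (fun M : 'rV[F]_n => M 0 i0) (Cz _ vC); rewrite !mxE.
    by apply/eqP; exact: oner_neq0.
  - pose f : {poly F} := 'X^((size h).-2).
    have e : ((size f).-1 + (size g).-1 = n.-1)%N.
      by move: dn sh2; rewrite size_polyXn /=; case: (size h) => [|[|s]] //= <- _; rewrite addSn.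
    have pt : forall m, (n.-1 <= m)%N -> (skew_mul theta f g)`_m = (m == n.-1)%:R.
      by move=> m hm; rewrite skew_top // e ?lead_coefXn ?mulr1 // e.
    have psz : (size (skew_mul theta f g) <= n)%N.
      apply/leq_sizeP => j hj; rewrite pt; last by lia.
      by rewrite (_ : (j == n.-1) = false) //; lia.
    exists (poly_rV (skew_mul theta f g)).
      by apply/Cdef; exists f; rewrite poly_rV_K.
    by rewrite mxE /= pt // eqxx.
have sC := Csh _ cC.
have d1 : (c *m c^T) 0 0 = 0.
  by have := cC; rewrite {1}Cd inE => /forall_inP/(_ _ cC)/eqP.
have d2 : (skew_shift theta alpha c *m (skew_shift theta alpha c)^T) 0 0 = 0.
  by have := sC; rewrite {1}Cd inE => /forall_inP/(_ _ sC)/eqP.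
rewrite dotE in d1; rewrite dotE in d2.
have E : forall j : 'I_n, skew_shift theta alpha c 0 j * skew_shift theta alpha c 0 j
   = theta (c 0 (ord_pred j) * c 0 (ord_pred j)) +
     (if val j == 0%N then (alpha * alpha - 1) * theta (c 0 (ord_pred j) * c 0 (ord_pred j)) else 0).
  by move=> j; rewrite /skew_shift mxE rmorphM; case: ifP => _; ring.
rewrite (eq_bigr _ (fun j _ => E j)) big_split /= in d2.
have R : \sum_(j < n) theta (c 0 (ord_pred j) * c 0 (ord_pred j))
       = theta (\sum_(j < n) c 0 j * c 0 j).
  by rewrite rmorph_sum; symmetry; exact: (reindex_inj (@ord_pred_inj n)).
rewrite R d1 rmorph0 add0r (bigD1 i0) //= big1 ?addr0 in d2; last first.
  move=> j ji; case: ifP => // /eqP ej; move: ji.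
  by rewrite (_ : j = i0) ?eqxx //; apply: val_inj.
have pi0 : ord_pred i0 = il.
  by apply: val_inj => /=; rewrite add0n modn_small.
rewrite pi0 c1 mulr1 rmorph1 mulr1 in d2.
have : (alpha - 1) * (alpha + 1) == 0 by apply/eqP; rewrite -d2; ring.
rewrite mulf_eq0 subr_eq0 => /orP [/eqP -> | ]; first by left.
by rewrite addr_eq0 => /eqP ->; right.
Qed.
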